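(* Let $\mathcal{N}$ be a chemical reaction network. The following are equivalent: (i) $\mathcal{N}$ is injective; (ii) for every rate vector $\kappa\in\mathbb{R}_+^{\mathcal{R}}$ and all distinct $a,b\in\overline{\mathbb{R}}_+^n$ such that $\mathcal{Y}_a\cap\mathcal{Y}_b=\emptyset$ and $a-b\in\Gamma$, one has $f_\kappa(a)\neq f_\kappa(b)$. In particular, if $b\in\mathbb{R}^n_+$, then $\mathcal{Y}_a\cap\mathcal{Y}_b=\emptyset$ holds for every $a\in\overline{\mathbb{R}}^n_+$.
   Context: A chemical reaction network $\mathcal{N}=(\mathcal{S},\mathcal{C},\mathcal{R})$ consists of a finite set of species $\mathcal{S}=\{S_1,\dots,S_n\}$, a finite set of complexes $\mathcal{C}\subset\mathbb{Z}_{\ge 0}^n$ (species $S_i$ identified with the $i$-th standard basis vector), and a finite set of reactions $\mathcal{R}\subset\mathcal{C}\times\mathcal{C}$, written $y\to y'$ ($y$ the reactant complex), with $y\ne y'$. $\mathbb{R}_+$ denotes the positive reals and $\overline{\mathbb{R}}_+$ the nonnegative reals. A rate vector is $\kappa=(k_{y\to y'})\in\mathbb{R}_+^{\mathcal{R}}$; the mass-action species formation rate function is $f_\kappa(c)=\sum_{y\to y'\in\mathcal{R}}k_{y\to y'}c^y(y'-y)$, $c^y=\prod_i c_i^{y_i}$. The stoichiometric subspace is $\Gamma=\mathrm{span}\{y'-y:y\to y'\in\mathcal{R}\}$. The network is injective if for every rate vector $\kappa\in\mathbb{R}_+^{\mathcal{R}}$ and all distinct $a,b\in\mathbb{R}^n_+$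 with $a-b\in\Gamma$ one has $f_\kappa(a)\ne f_\kappa(b)$. For $a\in\overline{\mathbb{R}}^n_+$ let $I_a=\{i: a_i=0\}$ and $\mathcal{Y}_a=\{y : y\to y'\in\mathcal{R}\text{ for some }y',\ I_a\cap\mathrm{supp}(y)\ne\emptyset\}$, where $\mathrm{supp}(y)=\{i:y_i\ne 0\}$. *)

(* Defs.v *)
From HB Require Import structures.
From mathcomp Require Import all_boot all_order all_algebra.
From mathcomp Require Import reals.
Set Implicit Arguments. Unset Strict Implicit. Unset Printing Implicit Defensive.
Import Order.TTheory GRing.Theory Num.Theory.
Local Open Scope ring_scope.

(* A complex: a vector in Z_{>=0}^n, species S_i = i-th basis vector. *)
Definition cplx (n : nat) := {ffun 'I_n -> nat}.

(* A reaction y -> y' is a pair (y, y'); a network's reaction set is a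
   duplicate-free list of reactions (hypotheses in the theorem). *)
Definition reaction (n : nat) := (cplx n * cplx n)%type.

Section CRN.
Variables (R : realType) (n : nat).

Definition rvec (r : reaction n) : 'rV[R]_n :=
  \row_i ((r.2 i)%:R - (r.1 i)%:R).

(* monomial c^y = prod_i c_i^{y_i}  (with 0^0 = 1) *)
Definition mono (c : 'rV[R]_n) (y : cplx n) : R := \prod_(i < n) c 0 i ^+ y i.

Definition fk (rs : seq (reaction n)) (k : reaction n -> R) (c : 'rV[R]_n)
  : 'rV[R]_n := \sum_(r <- rs) (k r * mono c r.1) *: rvec r.

Definition in_Gamma (rs : seq (reaction n)) (v : 'rV[R]_n) : Prop :=
  exists lam : reaction n -> R, v = \sum_(r <- rs) lam r *: rvec r.

Definition rate_vector (rs : seq (reaction n)) (k : reaction n -> R) : Prop :=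
  forall r, r \in rs -> 0 < k r.

Definition pos_vec (a : 'rV[R]_n) : Prop := forall i, 0 < a 0 i.
Definition nonneg_vec (a : 'rV[R]_n) : Prop := forall i, 0 <= a 0 i.

Definition inY (rs : seq (reaction n)) (a : 'rV[R]_n) (y : cplx n) : Prop :=
  (exists y', (y, y') \in rs) /\ (exists i, a 0 i = 0 /\ y i != 0%N).

Definition Y_disjoint (rs : seq (reaction n)) (a b : 'rV[R]_n) : Prop :=
  forall y, ~ (inY rs a y /\ inY rs b y).

Definition injective_network (rs : seq (reaction n)) : Prop :=
  forall k, rate_vector rs k ->
  forall a b, pos_vec a -> pos_vec b -> a != b -> in_Gamma rs (a - b) ->
  fk rs k a != fk rs k b.

Definition boundary_injective (rs : seq (reaction n)) : Prop :=
  forall k, rate_vector rs k ->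
  forall a b, nonneg_vec a -> nonneg_vec b -> a != b ->
  Y_disjoint rs a b -> in_Gamma rs (a - b) ->
  fk rs k a != fk rs k b.

End CRN.

(* Main.v *)
Require Import Defs.
From HB Require Import structures.
From mathcomp Require Import all_boot all_order all_algebra.
From mathcomp Require Import reals.
From mathcomp Require Import ring lra.
Import Order.TTheory GRing.Theory Num.Theory.
Local Open Scope ring_scope.
Set Implicit Arguments. Unset Strict Implicit.

Section Helpers.
Variables (R : realType) (n : nat).
Implicit Types (a b c : 'rV[R]_n) (y : cplx n).

Definition Cm c y : R := \prod_(i < n) (c 0 i + 1) ^+ y i.

Lemma mono_ge0 c y : nonneg_vec c -> 0 <= mono c y.
Proof. by move=> Hc; apply: prodr_ge0 => i _; apply: exprn_ge0. Qed.

Lemma Cm_gt0 c y : nonneg_vec c -> 0 < Cm c y.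
Proof.
move=> Hc; apply: prodr_gt0 => i _; apply: exprn_gt0.
by have := Hc i; lra.
Qed.

Lemma mono_gt0 c y : nonneg_vec c -> (forall i, y i != 0%N -> c 0 i != 0) ->
  0 < mono c y.
Proof.
move=> Hc Hy; apply: prodr_gt0 => i _.
case: (eqVneq (y i) 0%N) => [->|Hi]; first by rewrite expr0.
apply: exprn_gt0; rewrite lt_def Hy //; exact: Hc.
Qed.

Lemma mono_eq0 c y i0 : y i0 != 0%N -> c 0 i0 = 0 -> mono c y = 0.
Proof.
move=> Hy Hc; rewrite /mono (bigD1 i0) //= Hc expr0n.
by move: Hy; case: (y i0) => //= m _; rewrite mul0r.
Qed.

Lemma mono_le c (d : 'rV[R]_n) y : nonneg_vec c -> (forall i, c 0 i <= d 0 i) ->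
  mono c y <= mono d y.
Proof.
move=> Hc Hcd; apply: ler_prod => i _; rewrite exprn_ge0 //=.
apply: lerXn2r => //; rewrite qualifE /=; last apply: le_trans (Hcd i).
all: exact: Hc.
Qed.

Lemma mono_bound c (cp : 'rV[R]_n) y i0 eps : nonneg_vec c -> 0 < eps -> eps <= 1 ->
  y i0 != 0%N -> cp 0 i0 = eps ->
  (forall i, 0 <= cp 0 i <= c 0 i + 1) ->
  mono cp y <= eps * Cm c y.
Proof.
move=> Hc He0 He1 Hy Hi0 Hb.
rewrite /mono /Cm (bigD1 i0) //= [X in _ <= _ * X](bigD1 i0) //= Hi0.
rewrite mulrA; apply: ler_pM.
- by apply: exprn_ge0; lra.
- by apply: prodr_ge0 => i _; apply: exprn_ge0; case/andP: (Hb i).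
- move: Hy; case: (y i0) => //= m _.
  rewrite exprS; apply: ler_wpM2l; first lra.
  apply: (@le_trans _ _ 1); first by apply: exprn_ile1; lra.
  by apply: exprn_ege1; have := Hc i0; lra.
- apply: ler_prod => i _; case/andP: (Hb i) => H1 H2.
  rewrite exprn_ge0 //=; apply: lerXn2r => //; rewrite qualifE /=; first lra.

Qed.

Lemma caseB a b (ap bp : 'rV[R]_n) y i0 eps :
  nonneg_vec a -> nonneg_vec b -> (forall i, y i != 0%N -> b 0 i != 0) ->
  y i0 != 0%N -> a 0 i0 = 0 -> ap 0 i0 = eps ->
  (forall i, 0 <= ap 0 i <= a 0 i + 1) -> (forall i, b 0 i <= bp 0 i) ->
  0 < eps -> eps <= 1 ->
  eps <= (mono a y + mono b y) / (2 * (Cm a y + Cm b y)) ->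
  mono ap y < mono bp y /\ mono a y < mono b y.
Proof.
move=> Ha Hb Hyb Hy0 Ha0 Hap Hapb Hbp He0 He1 Hee.
have ma0 := @mono_eq0 a y i0 Hy0 Ha0.
have mbp := @mono_gt0 b y Hb Hyb.
have Ca := @Cm_gt0 a y Ha; have Cb := @Cm_gt0 b y Hb.
split; last by rewrite ma0.
have H1 := @mono_bound a ap y i0 eps Ha He0 He1 Hy0 Hap Hapb.
have H2 := @mono_le b bp y Hb Hbp.
rewrite ma0 add0r in Hee.
have H3 : eps * Cm a y < mono b y.
  apply: (@le_lt_trans _ _ (mono b y / (2 * (Cm a y + Cm b y)) * Cm a y)).
    by apply: ler_wpM2r => //; apply: ltW.
  rewrite mulrAC ltr_pdivrMr; last by apply: mulr_gt0 => //; apply: addr_gt0.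
  nra.
apply: le_lt_trans H1 _; exact: lt_le_trans H3 H2.
Qed.

Lemma foldmin (T : eqType) (e : T -> R) (s : seq T) :
  (forall r, 0 < e r) ->
  (0 < foldr (fun r acc => Num.min (e r) acc) 1 s) /\
  (foldr (fun r acc => Num.min (e r) acc) 1 s <= 1) /\
  (forall r, r \in s -> foldr (fun r acc => Num.min (e r) acc) 1 s <= e r).
Proof.
move=> He; elim: s => [|x s [IH1 [IH2 IH3]]] /=; first by split=> //; split.
split; first by rewrite lt_min He IH1.
split; first by rewrite ge_min IH2 orbT.
move=> r; rewrite inE => /orP [/eqP ->|Hr]; first by rewrite ge_min lexx.
by rewrite ge_min IH3 ?orbT.
Qed.

Lemma fk_sub (rs : seq (reaction n)) k c d :
  fk rs k c - fk rs k d =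
  \sum_(r <- rs) (k r * (mono c r.1 - mono d r.1)) *: rvec R r.
Proof.
rewrite /fk -sumrB; apply: eq_bigr => r _.
by rewrite -scalerBl mulrBr.
Qed.

End Helpers.

Lemma inj_to_boundary (R : realType) (n : nat) (rs : seq (reaction n)) :
  injective_network R rs -> boundary_injective R rs.
Proof.
move=> Hinj k Hk a b Ha Hb Hab Hdis HG; apply/negP => /eqP Hf.
pose e (r : reaction n) : R := if 0 < mono a r.1 + mono b r.1 then
  Num.min 1 ((mono a r.1 + mono b r.1) / (2 * (Cm a r.1 + Cm b r.1))) else 1.
have He : forall r, 0 < e r.
  move=> r; rewrite /e; case: ifP => // H; rewrite lt_min ltr01 /=.
  apply: divr_gt0 => //; apply: mulr_gt0 => //; apply: addr_gt0; exact: Cm_gt0.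
have [He0 [He1 HeR]] := foldmin rs He.
set eps := foldr _ 1 rs in He0 He1 HeR.
pose d (i : 'I_n) : R := if (a 0 i == 0) || (b 0 i == 0) then eps else 0.
have Hd : forall i, 0 <= d i <= 1.
  by move=> i; rewrite /d; case: ifP => _; apply/andP; split => //; apply: ltW.
pose ap : 'rV[R]_n := \row_i (a 0 i + d i).
pose bp : 'rV[R]_n := \row_i (b 0 i + d i).
have Hap : pos_vec ap.
  move=> i; rewrite mxE /d; case: (eqVneq (a 0 i) 0) => [->|Hai] /=.
    by rewrite add0r.
  have Hai' : 0 < a 0 i by rewrite lt_def Hai Ha.
  by case: ifP => _; [apply: addr_gt0 | rewrite addr0].
have Hbp : pos_vec bp.
  move=> i; rewrite mxE /d; case: (eqVneq (b 0 i) 0) => [->|Hbi] /=.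
    by rewrite orbT add0r.
  have Hbi' : 0 < b 0 i by rewrite lt_def Hbi Hb.
  by case: ifP => _; [apply: addr_gt0 | rewrite addr0].
have Hsub : ap - bp = a - b.
  by apply/rowP => i; rewrite !mxE; ring.
have key : forall r, r \in rs ->
    (mono a r.1 - mono b r.1 = 0 /\ mono ap r.1 - mono bp r.1 = 0) \/
    0 < (mono a r.1 - mono b r.1) / (mono ap r.1 - mono bp r.1).
  move=> [y y'] Hr /=.
  have Hsum_e : 0 < mono a y + mono b y ->
      eps <= (mono a y + mono b y) / (2 * (Cm a y + Cm b y)).
    by move=> Hs; have := HeR _ Hr; rewrite /e /= Hs le_min => /andP [_ ->].
  case: (boolP [exists i, (y i != 0%N) && ((a 0 i == 0) || (b 0 i == 0))]).
    case/existsP => i0 /andP [Hy0 /orP [/eqP Ha0 | /eqP Hb0]].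
      have Hyb : forall i, y i != 0%N -> b 0 i != 0.
        move=> i Hi; apply/eqP => Hbi; apply: (Hdis y); split; split.
        - by exists y'.
        - by exists i0.
        - by exists y'.
        - by exists i.
      have Hs : 0 < mono a y + mono b y.
        by apply: ltr_wpDl; [exact: mono_ge0 | exact: mono_gt0].
      have S1 : ap 0 i0 = eps by rewrite mxE /d Ha0 eqxx /= add0r.
      have S2 : forall i, 0 <= ap 0 i <= a 0 i + 1.
        by move=> i; rewrite mxE; have := Ha i; have := Hd i; lra.
      have S3 : forall i, b 0 i <= bp 0 i.
        by move=> i; rewrite mxE; have := Hd i; lra.
      have [H1 H2] := @caseB R n a b ap bp y i0 eps Ha Hb Hyb Hy0 Ha0 S1 S2 S3
        He0 He1 (Hsum_e Hs).
      right; rewrite -mulrNN -invrN !opprB; apply: divr_gt0; rewrite subr_gt0 //.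
    have Hya : forall i, y i != 0%N -> a 0 i != 0.
      move=> i Hi; apply/eqP => Hai; apply: (Hdis y); split; split.
      - by exists y'.
      - by exists i.
      - by exists y'.
      - by exists i0.
    have Hs : 0 < mono b y + mono a y.
      by apply: ltr_wpDl; [exact: mono_ge0 | exact: mono_gt0].
    have Hs' := Hsum_e (ltac:(by rewrite addrC)).
    rewrite (addrC (mono a y)) (addrC (Cm a y)) in Hs'.
    have S1 : bp 0 i0 = eps by rewrite mxE /d Hb0 eqxx orbT /= add0r.
    have S2 : forall i, 0 <= bp 0 i <= b 0 i + 1.
      by move=> i; rewrite mxE; have := Hb i; have := Hd i; lra.
    have S3 : forall i, a 0 i <= ap 0 i.
      by move=> i; rewrite mxE; have := Hd i; lra.
    have [H1 H2] := @caseB R n b a bp ap y i0 eps Hb Ha Hya Hy0 Hb0 S1 S2 S3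
      He0 He1 Hs'.
    right; apply: divr_gt0; rewrite subr_gt0 //.
  move/existsPn => Hnz.
  have Hm : forall c : 'rV[R]_n, (forall i, y i != 0%N -> d i = 0) ->
      mono (\row_i (c 0 i + d i)) y = mono c y.
    move=> c Hc; rewrite /mono; apply: eq_bigr => i _; rewrite mxE.
    case: (eqVneq (y i) 0%N) => [->|Hi]; first by rewrite !expr0.
    by rewrite Hc // addr0.
  have Hd0 : forall i, y i != 0%N -> d i = 0.
    by move=> i Hi; have := Hnz i; rewrite Hi /= /d => /negPf ->.
  rewrite /ap /bp !Hm //.
  case: (eqVneq (mono a y - mono b y) 0) => H; [left | right]; first by split.
  by rewrite divff.
pose k' r := if mono ap r.1 - mono bp r.1 == 0 then k r else
  k r * ((mono a r.1 - mono b r.1) / (mono ap r.1 - mono bp r.1)).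
have Hk' : rate_vector rs k'.
  move=> r Hr; rewrite /k'; case: (key r Hr) => [[H1 H2]|H].
    by rewrite H2 eqxx; exact: Hk.
  by case: ifP => _; [exact: Hk | exact: mulr_gt0 (Hk r Hr) H].
have Heq : forall r, r \in rs ->
    k' r * (mono ap r.1 - mono bp r.1) = k r * (mono a r.1 - mono b r.1).
  move=> r Hr; rewrite /k'; case: (key r Hr) => [[H1 H2]|H].
    by rewrite H2 H1 eqxx !mulr0.
  case: eqP => [H0|H0]; first by move: H; rewrite H0 invr0 mulr0 ltxx.
  by rewrite -!mulrA mulVf ?mulr1 //; apply/eqP.
have Hne : ap != bp.
  by apply: contra Hab => /eqP H; rewrite -subr_eq0 -Hsub H subrr.
have HGp : in_Gamma rs (ap - bp) by rewrite Hsub.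
have := Hinj k' Hk' ap bp Hap Hbp Hne HGp.
move=> /eqP; apply; apply/eqP; rewrite -subr_eq0 fk_sub.
rewrite (eq_big_seq (fun r => (k r * (mono a r.1 - mono b r.1)) *: rvec R r)).
  by rewrite -fk_sub Hf subrr.
by move=> r Hr; rewrite Heq.
Qed.

Theorem proposition5p2 (R : realType) (n : nat) (rs : seq (reaction n)) :
  uniq rs -> (forall r, r \in rs -> r.1 != r.2) ->
  (injective_network R rs <-> boundary_injective R rs) /\
  (forall a b : 'rV[R]_n, nonneg_vec a -> pos_vec b -> Y_disjoint rs a b).
Proof.
move=> _ _.
have P2 : forall a b : 'rV[R]_n, nonneg_vec a -> pos_vec b -> Y_disjoint rs a b.
  move=> a b _ Hb y [_ [_ [i [Hi _]]]].
  by have := Hb i; rewrite Hi ltxx.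
split=> //; split; first exact: inj_to_boundary.
move=> Hbd k Hk a b Ha Hb Hab HG.
apply: Hbd => //.
- by move=> i; apply: ltW.
- by move=> i; apply: ltW.
- by apply: P2 => // i; apply: ltW.
Qed.
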